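(* Let $f=(f_1,f_2):\mathbb{R}^2\to\mathbb{R}^2$ be smooth, $g=f_1^2+f_2^2$, $\delta>0$ with $\delta^2$ a regular value of $g$ and $P=g^{-1}(\delta^2)\neq\emptyset$. Let $J=\partial(f_1,f_2)/\partial(x_1,x_2)$ and $F_j=\partial(f_j,J)/\partial(x_1,x_2)$, $j=1,2$. Let $T=(-\partial g/\partial x_2,\partial g/\partial x_1)$, a non-vanishing tangent vector field on $P$. For $p\in P$ let $x(t)$ be the integral curve of $T$ in $P$ with $x(0)=p$, and let $\theta$ be a smooth function near $0$ with $f(x(t))=(\delta\cos\theta(t),\delta\sin\theta(t))$. Suppose $p$ is a critical point of $f|P:P\to S^1(\delta)$. Then $$\operatorname{sign}(\theta''(0))=\operatorname{sign}\big(f_1F_1+f_2F_2\big)(p).$$ In particular, $p\in P$ is a non-degenerate critical point of $f|P$ if and only if $J(p)=0$ and $(f_1F_1+f_2F_2)(p)\neq0$.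
   Context: $S^1(\delta)$ is the circle of radius $\delta$ centered at the origin. *)

(* Defs.v *)
From Stdlib Require Import Reals List.
From Coquelicot Require Import Coquelicot.
Open Scope R_scope.

Definition pd1 (h : R -> R -> R) : R -> R -> R :=
  fun x y => Derive (fun t => h t y) x.
Definition pd2 (h : R -> R -> R) : R -> R -> R :=
  fun x y => Derive (fun t => h x t) y.

(* Iterated partial derivative along a list of directions
   (false = d/dx1, true = d/dx2). *)
Fixpoint iterD (l : list bool) (h : R -> R -> R) : R -> R -> R :=
  match l with
  | nil => h
  | b :: l' => (if b then pd2 else pd1) (iterD l' h)
  end.

Definition smooth2 (h : R -> R -> R) : Prop :=
  forall (l : list bool) (x y : R),
    ex_derive (fun t => iterD l h t y) x /\
    ex_derive (fun t => iterD l h x t) y /\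
    continuous (fun q : R * R => iterD l h (fst q) (snd q)) (x, y).

Definition smooth_on_interval (e : R) (th : R -> R) : Prop :=
  forall (n : nat) (t : R), -e < t < e -> ex_derive (Derive_n th n) t.

Definition jac (a b : R -> R -> R) : R -> R -> R :=
  fun x y => pd1 a x y * pd2 b x y - pd2 a x y * pd1 b x y.

Definition sgn (r : R) : R :=
  match Rcase_abs r with
  | left _ => -1
  | right _ => if Req_EM_T r 0 then 0 else 1
  end.

(* p = (p1,p2) is a critical point of the restriction of f = (f1,f2) to the
   regular level set P = g^{-1}(c): the differential of f vanishes on the
   tangent space T_p P = ker dg_p. *)
Definition crit_restr (f1 f2 g : R -> R -> R) (p1 p2 : R) : Prop :=
  forall v1 v2 : R,
    pd1 g p1 p2 * v1 + pd2 g p1 p2 * v2 = 0 ->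
    pd1 f1 p1 p2 * v1 + pd2 f1 p1 p2 * v2 = 0 /\
    pd1 f2 p1 p2 * v1 + pd2 f2 p1 p2 * v2 = 0.

(* Non-degenerate critical point of f|P, expressed in the local charts
   t |-> x(t) of P (integral curve of the non-vanishing field T) and the
   angle coordinate theta on S^1(delta): critical and theta''(0) <> 0. *)
Definition nondeg_crit_chart (f1 f2 g : R -> R -> R) (p1 p2 : R)
    (th : R -> R) : Prop :=
  crit_restr f1 f2 g p1 p2 /\ Derive (Derive th) 0 <> 0.

(* Main.v *)
Require Import Defs.
From Stdlib Require Import Reals List.
From Coquelicot Require Import Coquelicot.
Open Scope R_scope.
From Stdlib Require Import Lra Psatz.
Lemma DL1 f x y dx dy : DL_pol 1 f x y dx dy = f x y + pd1 f x y * dx + pd2 f x y * dy.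
Proof. unfold DL_pol, differential. cbn -[partial_derive Binomial.C]. 
 replace (Binomial.C 0 0) with 1 by (unfold Binomial.C; simpl; field).
 replace (Binomial.C 1 0) with 1 by (unfold Binomial.C; simpl; field).
 replace (Binomial.C 1 1) with 1 by (unfold Binomial.C; simpl; field).
 change (partial_derive 0 0 f x y) with (f x y).
 change (partial_derive 1 0 f x y) with (pd1 f x y).
 change (partial_derive 0 1 f x y) with (pd2 f x y).
 field.
Qed.

Lemma cont2 h l u v : smooth2 h -> continuity_2d_pt (iterD l h) u v.
Proof. intros Hs. apply continuity_2d_pt_filterlim. apply (Hs l u v). Qed.

Lemma exdiff2 h l u v : smooth2 h -> ex_diff_n (iterD l h) 2 u v.
Proof.
  intros Hs. 
  destruct (Hs l u v) as [A1 [A2 _]].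
  destruct (Hs (false::l) u v) as [B1 [B2 _]].
  destruct (Hs (true::l) u v) as [C1 [C2 _]].
  split; [apply cont2; auto|].
  split; [exact A1|]. split; [exact A2|].
  split.
  - split; [apply (cont2 h (false::l)); auto|].
    split; [exact B1|]. split; [exact B2|].
    split; (split; [|exact I]).
    + apply (cont2 h (false::false::l)); auto.
    + apply (cont2 h (true::false::l)); auto.
  - split; [apply (cont2 h (true::l)); auto|].
    split; [exact C1|]. split; [exact C2|].
    split; (split; [|exact I]).
    + apply (cont2 h (false::true::l)); auto.
    + apply (cont2 h (true::true::l)); auto.
Qed.
Lemma smooth_diff h l x y : smooth2 h -> differentiable_pt_lim (iterD l h) x y (iterD (false::l) h x y) (iterD (true::l) h x y).
Proof.
 intros Hs eps.
 destruct (Taylor_Lagrange_2d (iterD l h) 1 x y) as [D [d Hd]].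
 { exists (mkposreal 1 Rlt_0_1). intros; apply exdiff2; auto. }
 pose proof (Rabs_pos D) as HD0.
 assert (Hp: 0 < Rmin d (eps / (Rabs D + 1))).
 { apply Rmin_pos; [apply cond_pos | apply Rdiv_lt_0_compat; [apply cond_pos| lra]]. }
 exists (mkposreal _ Hp). intros u v Hu Hv. simpl in Hu, Hv.
 assert (Hu' : Rabs (u - x) < d) by (eapply Rlt_le_trans; [exact Hu| apply Rmin_l]).
 assert (Hv' : Rabs (v - y) < d) by (eapply Rlt_le_trans; [exact Hv| apply Rmin_l]).
 specialize (Hd u v Hu' Hv'). rewrite DL1 in Hd.
 assert (Hm : Rmax (Rabs (u-x)) (Rabs (v-y)) < eps / (Rabs D + 1)).
 { apply Rmax_lub_lt; [eapply Rlt_le_trans; [exact Hu| apply Rmin_r]|eapply Rlt_le_trans; [exact Hv| apply Rmin_r]]. }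
 assert (Hm0 : 0 <= Rmax (Rabs (u-x)) (Rabs (v-y))).
 { eapply Rle_trans; [apply Rabs_pos| apply Rmax_l]. }
 set (m := Rmax (Rabs (u-x)) (Rabs (v-y))) in *.
 change (iterD (false::l) h x y) with (pd1 (iterD l h) x y).
 change (iterD (true::l) h x y) with (pd2 (iterD l h) x y).
 set (k := iterD l h) in *.
 replace (k u v - k x y - (pd1 k x y * (u - x) + pd2 k x y * (v - y)))
   with (k u v - (k x y + pd1 k x y * (u - x) + pd2 k x y * (v - y))) by ring.
 eapply Rle_trans; [exact Hd|].
 assert (Hm2 : m * (Rabs D + 1) <= eps).
 { apply Rlt_le. apply (Rmult_lt_compat_r (Rabs D + 1)) in Hm; [|lra].
   unfold Rdiv in Hm. rewrite Rmult_assoc, Rinv_l in Hm; lra. }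
 pose proof (Rle_abs D).
 simpl. nra.
Qed.

Lemma chain h l (Hs: smooth2 h) (u1 u2 : R -> R) t d1 d2 :
  is_derive u1 t d1 -> is_derive u2 t d2 ->
  is_derive (fun s => iterD l h (u1 s) (u2 s)) t
    (iterD (false::l) h (u1 t) (u2 t) * d1 + iterD (true::l) h (u1 t) (u2 t) * d2).
Proof.
  intros H1 H2. apply is_derive_Reals. apply derivable_pt_lim_comp_2d.
  - apply smooth_diff; auto.
  - apply is_derive_Reals; auto.
  - apply is_derive_Reals; auto.
Qed.

Lemma pd1_g f1 f2 x y : smooth2 f1 -> smooth2 f2 ->
  pd1 (fun a b => f1 a b ^ 2 + f2 a b ^ 2) x y = 2*(f1 x y * pd1 f1 x y + f2 x y * pd1 f2 x y).
Proof.
  intros H1 H2. unfold pd1. apply is_derive_unique. auto_derive.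
  - split; [apply (H1 nil x y)|split; [apply (H2 nil x y)|exact I]].
  - ring.
Qed.

Lemma pd2_g f1 f2 x y : smooth2 f1 -> smooth2 f2 ->
  pd2 (fun a b => f1 a b ^ 2 + f2 a b ^ 2) x y = 2*(f1 x y * pd2 f1 x y + f2 x y * pd2 f2 x y).
Proof.
  intros H1 H2. unfold pd2. apply is_derive_unique. auto_derive.
  - split; [apply (H1 nil x y)|split; [apply (H2 nil x y)|exact I]].
  - ring.
Qed.

Lemma pd1J f1 f2 x y : smooth2 f1 -> smooth2 f2 ->
  pd1 (jac f1 f2) x y = pd1 (pd1 f1) x y * pd2 f2 x y + pd1 f1 x y * pd1 (pd2 f2) x y
    - (pd1 (pd2 f1) x y * pd1 f2 x y + pd2 f1 x y * pd1 (pd1 f2) x y).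
Proof.
  intros H1 H2. unfold pd1 at 1. unfold jac. apply is_derive_unique. auto_derive.
  - repeat split; first [apply (H1 (false::nil) x y) | apply (H1 (true::nil) x y)
       | apply (H2 (false::nil) x y) | apply (H2 (true::nil) x y)].
  - unfold pd1, pd2. ring.
Qed.

Lemma pd2J f1 f2 x y : smooth2 f1 -> smooth2 f2 ->
  pd2 (jac f1 f2) x y = pd2 (pd1 f1) x y * pd2 f2 x y + pd1 f1 x y * pd2 (pd2 f2) x y
    - (pd2 (pd2 f1) x y * pd1 f2 x y + pd2 f1 x y * pd2 (pd1 f2) x y).
Proof.
  intros H1 H2. unfold pd2 at 1. unfold jac. apply is_derive_unique. auto_derive.
  - repeat split; first [apply (H1 (false::nil) x y) | apply (H1 (true::nil) x y)
       | apply (H2 (false::nil) x y) | apply (H2 (true::nil) x y)].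
  - unfold pd1, pd2. ring.
Qed.

Lemma comb (A B C D : R -> R) (t dA dB dC dD : R) : is_derive A t dA -> is_derive B t dB ->
  is_derive C t dC -> is_derive D t dD ->
  is_derive (fun s => 2*(A s * B s - C s * D s)) t (2*(dA*B t + A t*dB - (dC*D t + C t*dD))).
Proof.
  intros HA HB HC HD. auto_derive.
  - repeat split; eexists; eassumption.
  - replace (Derive (fun x => A x) t) with dA by (symmetry; apply is_derive_unique; exact HA).
    replace (Derive (fun x => B x) t) with dB by (symmetry; apply is_derive_unique; exact HB).
    replace (Derive (fun x => C x) t) with dC by (symmetry; apply is_derive_unique; exact HC).
    replace (Derive (fun x => D x) t) with dD by (symmetry; apply is_derive_unique; exact HD).
    ring.
Qed.

Lemma sgn4 s : sgn (4 * s) = sgn s.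
Proof.
  unfold sgn. destruct (Rcase_abs (4*s)); destruct (Rcase_abs s);
  try destruct (Req_EM_T (4*s) 0); try destruct (Req_EM_T s 0); lra.
Qed.

Lemma loc_int eps t : -eps < t < eps -> locally t (fun s => -eps < s < eps).
Proof.
  intros [H1 H2]. apply filter_and.
  - apply (open_gt (-eps)). exact H1.
  - apply (open_lt eps). exact H2.
Qed.

Theorem lemma5p2 :
  forall (f1 f2 : R -> R -> R) (delta : R),
    smooth2 f1 -> smooth2 f2 ->
    0 < delta ->
    let g := fun x y => f1 x y ^ 2 + f2 x y ^ 2 in
    (forall x y, g x y = delta ^ 2 -> pd1 g x y <> 0 \/ pd2 g x y <> 0) ->
    (exists x y, g x y = delta ^ 2) ->
    let J := jac f1 f2 in
    let F1 := jac f1 J in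
    let F2 := jac f2 J in
    forall (p1 p2 : R), g p1 p2 = delta ^ 2 ->
    forall (eps : R) (x1 x2 th : R -> R),
      0 < eps ->
      x1 0 = p1 -> x2 0 = p2 ->
      (forall t, -eps < t < eps ->
         is_derive x1 t (- pd2 g (x1 t) (x2 t)) /\
         is_derive x2 t (pd1 g (x1 t) (x2 t)) /\
         g (x1 t) (x2 t) = delta ^ 2) ->
      smooth_on_interval eps th ->
      (forall t, -eps < t < eps ->
         f1 (x1 t) (x2 t) = delta * cos (th t) /\
         f2 (x1 t) (x2 t) = delta * sin (th t)) ->
      (crit_restr f1 f2 g p1 p2 ->
         sgn (Derive (Derive th) 0) =
         sgn (f1 p1 p2 * F1 p1 p2 + f2 p1 p2 * F2 p1 p2)) /\
      (nondeg_crit_chart f1 f2 g p1 p2 th <->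
         J p1 p2 = 0 /\ f1 p1 p2 * F1 p1 p2 + f2 p1 p2 * F2 p1 p2 <> 0).
Proof.
  intros f1 f2 delta Hs1 Hs2 Hd g Hreg Hne J F1 F2 p1 p2 Hp eps x1 x2 th Heps
    Hx1 Hx2 Hcurve Hth Hf.
  assert (Hg1 : forall x y, pd1 g x y = 2*(f1 x y * pd1 f1 x y + f2 x y * pd1 f2 x y))
    by (intros; apply pd1_g; auto).
  assert (Hg2 : forall x y, pd2 g x y = 2*(f1 x y * pd2 f1 x y + f2 x y * pd2 f2 x y))
    by (intros; apply pd2_g; auto).
  assert (Hth1 : forall t, -eps < t < eps -> Derive th t = 2 * J (x1 t) (x2 t)).
  { intros t Ht. destruct (Hcurve t Ht) as [Dx1 [Dx2 _]].
    assert (Eth : ex_derive th t) by exact (Hth 0%nat t Ht).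
    pose proof (chain f1 nil Hs1 x1 x2 t _ _ Dx1 Dx2) as C1.
    pose proof (chain f2 nil Hs2 x1 x2 t _ _ Dx1 Dx2) as C2.
    assert (C1' : is_derive (fun s => delta * cos (th s)) t
       (pd1 f1 (x1 t) (x2 t) * - pd2 g (x1 t) (x2 t) + pd2 f1 (x1 t) (x2 t) * pd1 g (x1 t) (x2 t))).
    { eapply is_derive_ext_loc; [| exact C1].
      apply filter_imp with (2 := loc_int eps t Ht). intros s Hs. apply (Hf s Hs). }
    assert (C2' : is_derive (fun s => delta * sin (th s)) t
       (pd1 f2 (x1 t) (x2 t) * - pd2 g (x1 t) (x2 t) + pd2 f2 (x1 t) (x2 t) * pd1 g (x1 t) (x2 t))).
    { eapply is_derive_ext_loc; [| exact C2].
      apply filter_imp with (2 := loc_int eps t Ht). intros s Hs. apply (Hf s Hs). }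
    assert (C1'' : is_derive (fun s => delta * cos (th s)) t (delta * (- sin (th t) * Derive th t))).
    { auto_derive; [exact Eth | change (fun x : R => th x) with th; ring]. }
    assert (C2'' : is_derive (fun s => delta * sin (th s)) t (delta * (cos (th t) * Derive th t))).
    { auto_derive; [exact Eth | change (fun x : R => th x) with th; ring]. }
    pose proof (is_derive_unique _ _ _ C1') as U1.
    pose proof (is_derive_unique _ _ _ C1'') as U1'.
    pose proof (is_derive_unique _ _ _ C2') as U2.
    pose proof (is_derive_unique _ _ _ C2'') as U2'.
    rewrite U1 in U1'. rewrite U2 in U2'. clear U1 U2 C1 C2 C1' C2' C1'' C2''.
    rewrite Hg1, Hg2 in U1', U2'.
    destruct (Hf t Ht) as [E1 E2]. rewrite E1, E2 in U1', U2'.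
    unfold J, jac.
    set (c := cos (th t)) in *. set (s := sin (th t)) in *.
    assert (Hcs : s*s + c*c = 1) by (unfold s, c; pose proof (sin2_cos2 (th t)); unfold Rsqr in *; lra).
    set (T := Derive th t) in *.
    set (a1 := pd1 f1 (x1 t) (x2 t)) in *. set (b1 := pd2 f1 (x1 t) (x2 t)) in *.
    set (a2 := pd1 f2 (x1 t) (x2 t)) in *. set (b2 := pd2 f2 (x1 t) (x2 t)) in *.
    assert (K : delta * T = delta * (2 * (a1 * b2 - b1 * a2))).
    { transitivity (delta * T * (s*s + c*c)); [rewrite Hcs; ring|].
      transitivity (- s * (delta * (- s * T)) + c * (delta * (c * T))); [ring|].
      rewrite <- U1', <- U2'.
      transitivity (delta*(2*(a1*b2-b1*a2))*(s*s+c*c)); [ring | rewrite Hcs; ring]. }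
    apply Rmult_eq_reg_l with delta; [exact K | lra]. }
  assert (H0 : -eps < 0 < eps) by lra.
  assert (HDD : Derive (Derive th) 0 = 4 * (f1 p1 p2 * F1 p1 p2 + f2 p1 p2 * F2 p1 p2)).
  { rewrite (Derive_ext_loc (Derive th) (fun t => 2 * J (x1 t) (x2 t))).
    2:{ apply filter_imp with (2 := loc_int eps 0 H0). intros s Hs. apply Hth1; auto. }
    destruct (Hcurve 0 H0) as [Dx1 [Dx2 _]].
    pose proof (chain f1 (false::nil) Hs1 x1 x2 0 _ _ Dx1 Dx2) as CA.
    pose proof (chain f2 (true::nil) Hs2 x1 x2 0 _ _ Dx1 Dx2) as CB.
    pose proof (chain f1 (true::nil) Hs1 x1 x2 0 _ _ Dx1 Dx2) as CC.
    pose proof (chain f2 (false::nil) Hs2 x1 x2 0 _ _ Dx1 Dx2) as CD.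
    pose proof (comb _ _ _ _ _ _ _ _ _ CA CB CC CD) as CJ.
    erewrite is_derive_unique; [| exact CJ].
    cbn [iterD]. subst p1 p2.
    unfold F1, F2, jac at 1 2.
    unfold J. rewrite !pd1J, !pd2J by auto.
    rewrite Hg1, Hg2. ring. }
  assert (Hcrit : crit_restr f1 f2 g p1 p2 <-> J p1 p2 = 0).
  { assert (Hpos : f1 p1 p2 ^ 2 + f2 p1 p2 ^ 2 = delta ^ 2) by exact Hp.
    unfold J, jac. split.
    - intros Hc.
      destruct (Hc (- pd2 g p1 p2) (pd1 g p1 p2)) as [E1 E2]; [ring|].
      rewrite Hg1, Hg2 in E1, E2.
      set (a1 := pd1 f1 p1 p2) in *. set (b1 := pd2 f1 p1 p2) in *.
      set (a2 := pd1 f2 p1 p2) in *. set (b2 := pd2 f2 p1 p2) in *.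
      set (u1 := f1 p1 p2) in *. set (u2 := f2 p1 p2) in *.
      assert (K : (a1 * b2 - b1 * a2) * (u1^2 + u2^2) = (u1 * (a2 * - (2 * (u1 * b1 + u2 * b2)) + b2 * (2 * (u1 * a1 + u2 * a2)))
         - u2 * (a1 * - (2 * (u1 * b1 + u2 * b2)) + b1 * (2 * (u1 * a1 + u2 * a2))))/2) by field.
      rewrite E1, E2, Hpos in K.
      assert (Hd2 : delta ^ 2 <> 0) by (apply pow_nonzero; lra).
      apply (Rmult_eq_reg_r (delta ^ 2)); [|exact Hd2]. rewrite K. field.
    - intros HJ v1 v2 Hv.
      destruct (Hreg p1 p2 Hp) as [Hn | Hn].
      + split; apply (Rmult_eq_reg_l (pd1 g p1 p2)); try exact Hn; rewrite Rmult_0_r.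
        * transitivity (pd1 f1 p1 p2 * (pd1 g p1 p2 * v1 + pd2 g p1 p2 * v2)
             - 2 * v2 * f2 p1 p2 * (pd1 f1 p1 p2 * pd2 f2 p1 p2 - pd2 f1 p1 p2 * pd1 f2 p1 p2)).
          { rewrite !Hg1, !Hg2. ring. }
          rewrite Hv, HJ. ring.
        * transitivity (pd1 f2 p1 p2 * (pd1 g p1 p2 * v1 + pd2 g p1 p2 * v2)
             + 2 * v2 * f1 p1 p2 * (pd1 f1 p1 p2 * pd2 f2 p1 p2 - pd2 f1 p1 p2 * pd1 f2 p1 p2)).
          { rewrite !Hg1, !Hg2. ring. }
          rewrite Hv, HJ. ring.
      + split; apply (Rmult_eq_reg_l (pd2 g p1 p2)); try exact Hn; rewrite Rmult_0_r.
        * transitivity (pd2 f1 p1 p2 * (pd1 g p1 p2 * v1 + pd2 g p1 p2 * v2)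
             + 2 * v1 * f2 p1 p2 * (pd1 f1 p1 p2 * pd2 f2 p1 p2 - pd2 f1 p1 p2 * pd1 f2 p1 p2)).
          { rewrite !Hg1, !Hg2. ring. }
          rewrite Hv, HJ. ring.
        * transitivity (pd2 f2 p1 p2 * (pd1 g p1 p2 * v1 + pd2 g p1 p2 * v2)
             - 2 * v1 * f1 p1 p2 * (pd1 f1 p1 p2 * pd2 f2 p1 p2 - pd2 f1 p1 p2 * pd1 f2 p1 p2)).
          { rewrite !Hg1, !Hg2. ring. }
          rewrite Hv, HJ. ring. }
  split.
  - intros _. rewrite HDD. apply sgn4.
  - unfold nondeg_crit_chart. rewrite Hcrit, HDD. split.
    + intros [A B]. split; [exact A|]. intros C. apply B. rewrite C. ring.
    + intros [A B]. split; [exact A|]. intros C. apply B. lra.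
Qed.
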